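(* Let $n\geq 2L(3,1)$ and let $\mathcal{F},\mathcal{G}\subseteq\Pi(n,3)$ be non-trivial cross $1$-intersecting families maximizing $|\mathcal{F}||\mathcal{G}|$ (among all such pairs). If $|\mathcal{F}|\leq|\mathcal{G}|$, then $\mathcal{F}=\mathcal{A}(3,\{A\},M)$ and $\mathcal{G}=\mathcal{B}(3,\{A\},M)$ for some singleton $A$ and some $3$-partition $M$ (of a subset of $[n]$) with $A\in M$ and $|\cup M|<n$.
   Context: $[n]=\{1,\ldots,n\}$. A partition is a set of pairwise disjoint nonempty sets (blocks); $\cup P$ is the union of its blocks. $\Pi(n,k)$ is the set of partitions of $[n]$ into $k$ blocks. $F\cap G$ is the set of common blocks. $L(k,t):=(t+1)+(k-t+1)\log_2((t+1)(k-t+1))$, so $L(3,1)=2+3\log_2 6$. $\mathcal{F},\mathcal{G}$ are cross $1$-intersecting if $|F\cap G|\geq1$ for all $F\in\mathcal{F},G\in\mathcal{G}$; non-trivial if no block belongs to every member of $\mathcal{F}\cup\mathcal{G}$. For an $\ell$-partition $M$ and $X\subseteq M$ with $|X|=t$, $\overline{\cup M}=[n]\setminus\cup M$, $\mathcal{A}(k,X,M)=\{F\in\Pi(n,k):X\subseteq F,\ F\cap(M\setminus X)\neq\emptyset\}$ and $\mathcal{B}(\ell,X,M)=\{F\in\Pi(n,\ell):X\subseteq F\}\cup\{(M\setminus\{B\})\cup\{B\cup\overline{\cup M}\}:B\in X\}$. *)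

(* Defs.v *)
From Stdlib Require Import Reals.
From mathcomp Require Import all_boot.
Set Implicit Arguments. Unset Strict Implicit. Unset Printing Implicit Defensive.

(* The ground set [n] = {1,...,n} is represented by 'I_n = {0,...,n-1}. *)

Definition Lkt (k t : nat) : R :=
  Rplus (INR (t + 1))
        (Rmult (INR (k - t + 1))
               (Rdiv (ln (INR ((t + 1) * (k - t + 1)))) (ln (INR 2)))).

Definition is_partial_partition (n : nat) (P : {set {set 'I_n}}) : bool :=
  trivIset P && (set0 \notin P).

Definition Pi (n k : nat) : {set {set {set 'I_n}}} :=
  [set P : {set {set 'I_n}} | partition P [set: 'I_n] & #|P| == k].

Definition cross1 (n : nat) (calF calG : {set {set {set 'I_n}}}) : Prop :=
  forall F G, F \in calF -> G \in calG -> 1 <= #|F :&: G|.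

Definition nontrivial (n : nat) (calF calG : {set {set {set 'I_n}}}) : Prop :=
  ~ exists B : {set 'I_n}, forall P, P \in calF :|: calG -> B \in P.

Definition calA (n k : nat) (X M : {set {set 'I_n}}) : {set {set {set 'I_n}}} :=
  [set F in Pi n k | (X \subset F) && (F :&: (M :\: X) != set0)].

Definition calB (n l : nat) (X M : {set {set 'I_n}}) : {set {set {set 'I_n}}} :=
  [set F in Pi n l | X \subset F] :|:
  [set (M :\ B) :|: [set B :|: ~: cover M] | B in X].

(* Main.v *)
Require Import Defs.
From Stdlib Require Import Reals.
From mathcomp Require Import all_boot.
From Stdlib Require Import Lra.
From mathcomp Require Import zify.

Module Helpers.
Set Implicit Arguments. Unset Strict Implicit. Unset Printing Implicit Defensive.

Section Base.
Variable n : nat.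
Implicit Types (X Y C U V : {set 'I_n}) (P Q : {set {set 'I_n}}).

Definition f3 X Y : {set {set 'I_n}} := [set X; Y; ~:(X :|: Y)].

Lemma PiP P : P \in Pi n 3 ->
  [/\ cover P = setT, trivIset P, set0 \notin P & #|P| = 3].
Proof.
rewrite inE => /andP [/and3P [/eqP h1 h2 h3] /eqP h4]; by split.
Qed.

Lemma Pi_disj P X Y : P \in Pi n 3 -> X \in P -> Y \in P -> X != Y ->
  [disjoint X & Y].
Proof. by case/PiP=> _ /trivIsetP h _ _; apply: h. Qed.

Lemma Pi_neq0 P X : P \in Pi n 3 -> X \in P -> X != set0.
Proof. by case/PiP=> _ _ h0 _ XP; apply: contraNneq h0 => <-. Qed.

Lemma Pi_cover P x : P \in Pi n 3 -> exists2 B, B \in P & x \in B.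
Proof.
case/PiP=> cP _ _ _; have : x \in cover P by rewrite cP inE.
by case/bigcupP=> B BP xB; exists B.
Qed.

Lemma disj_in X Y x : [disjoint X & Y] -> x \in X -> x \in Y -> False.
Proof. move=> /disjoint_setI0 /setP /(_ x); rewrite !inE => h xX xY; by rewrite xX xY in h. Qed.

Lemma Pi_third P X Y : P \in Pi n 3 -> X \in P -> Y \in P -> X != Y ->
  P = f3 X Y.
Proof.
move=> PP XP YP XY.
have [cP tP s0 c3] := PiP PP.
have c1 : #|P :\ X :\ Y| == 1.
  have h1 := cardsD1 X P; have h2 := cardsD1 Y (P :\ X).
  have YPX : Y \in P :\ X by rewrite !inE YP andbT eq_sym.
  rewrite YPX in h2.
  rewrite XP c3 h2 in h1; move/eqP: h1; rewrite /= !add1n !eqSS eq_sym; exact: id.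
have [Z hZ] := cards1P c1.
have ZP : Z \in P :\ X :\ Y by rewrite hZ set11.
rewrite !inE in ZP; case/and3P: ZP => ZY ZX ZP.
have dXZ : [disjoint X & Z] by apply: (Pi_disj PP XP ZP); rewrite eq_sym.
have dYZ : [disjoint Y & Z] by apply: (Pi_disj PP YP ZP); rewrite eq_sym.
have eZ : Z = ~:(X :|: Y).
  apply/setP=> x; rewrite !inE; apply/idP/idP.
  - move=> xZ; apply/negP => /orP [xX|xY].
    + exact: (disj_in dXZ xX xZ).
    + exact: (disj_in dYZ xY xZ).
  - move=> h; have [B BP xB] := Pi_cover x PP.
    case: (eqVneq B X) => [eBX|nBX]; first by subst B; rewrite xB in h.
    case: (eqVneq B Y) => [eBY|nBY]; first by subst B; rewrite xB orbT in h.
    have : B \in P :\ X :\ Y by rewrite !inE nBX nBY BP.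
    by rewrite hZ inE => /eqP <-.
apply/setP=> B; rewrite /f3 !inE; apply/idP/idP.
- move=> BP; case: (eqVneq B X) => //= nBX; case: (eqVneq B Y) => //= nBY.
  have : B \in P :\ X :\ Y by rewrite !inE nBX nBY BP.
  by rewrite hZ inE eZ.
- by move=> /orP [/orP [] |] /eqP ->; rewrite ?XP ?YP // -eZ.
Qed.

Lemma disj_neq X Y : X != set0 -> [disjoint X & Y] -> X != Y.
Proof.
move=> X0 dXY; apply/eqP=> eXY; subst Y.
by move/disjoint_setI0: dXY; rewrite setIid; apply/eqP.
Qed.

Lemma disjC3 X Y : [disjoint X & ~:(X :|: Y)].
Proof. by rewrite disjoints_subset setCK subsetUl. Qed.
Lemma disjC3r X Y : [disjoint Y & ~:(X :|: Y)].
Proof. by rewrite disjoints_subset setCK subsetUr. Qed.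

Lemma f3_Pi X Y : X != set0 -> Y != set0 -> [disjoint X & Y] ->
  ~:(X :|: Y) != set0 -> f3 X Y \in Pi n 3.
Proof.
move=> X0 Y0 dXY Z0.
have nXY := disj_neq X0 dXY.
have nXZ := disj_neq X0 (disjC3 X Y).
have nYZ := disj_neq Y0 (disjC3r X Y).
rewrite inE /partition; apply/andP; split; first (apply/and3P; split).
- apply/eqP/setP=> x; rewrite inE; apply/bigcupP.
  case: (boolP (x \in X :|: Y)) => [|h].
  + case/setUP=> h; [exists X | exists Y]; rewrite // /f3 !inE eqxx ?orbT //.
  + by exists (~:(X :|: Y)); [rewrite /f3 !inE eqxx !orbT | rewrite inE].
- apply/trivIsetP=> A B; rewrite /f3 !inE.
  move=> /orP [/orP [] | ] /eqP -> /orP [/orP [] | ] /eqP -> //; rewrite ?eqxx //= => _;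
    first [exact: disjC3 | exact: disjC3r | done | rewrite disjoint_sym;
       first [exact: disjC3 | exact: disjC3r | done]].
- by rewrite /f3 !inE !negb_or !(eq_sym set0) X0 Y0 Z0.
- rewrite /f3 -setUA cardsU1 cards2 !inE nYZ negb_or nXY nXZ.
  done.
Qed.

Definition SC C : {set {set {set 'I_n}}} := [set P in Pi n 3 | C \in P].

Lemma card_powD1 (D : {set 'I_n}) : #|powerset D :\ D| = 2 ^ #|D| - 1.
Proof.
have := cardsD1 D (powerset D); rewrite powersetE subxx card_powerset => ->.
by rewrite add1n subn1.
Qed.

Lemma inSC G C : G \in Pi n 3 -> C \in G -> G \in SC C.
Proof. by move=> h1 h2; apply/setIdP. Qed.

Lemma SCP G C : G \in SC C -> G \in Pi n 3 /\ C \in G.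
Proof. by move/setIdP. Qed.

Lemma S_upper C x0 : x0 \notin C -> #|SC C| <= 2 ^ (n - #|C| - 1) - 1.
Proof.
move=> x0C.
have cD : #|~: C :\ x0| = n - #|C| - 1.
  have := cardsD1 x0 (~: C); rewrite inE x0C /= => h.
  have := cardsC C; rewrite card_ord => h2.
  have h3 : #|~:C| = n - #|C| := etrans (esym (addKn #|C| #|~:C|)) (congr1 (fun x => x - #|C|) h2).
  by rewrite -h3 h addKn.
set D := ~: C :\ x0.
rewrite -cD -card_powD1.
pose g P := pblock P x0 :\ x0.
have key : forall P, P \in SC C -> [/\ pblock P x0 \in P, x0 \in pblock P x0,
     P = f3 C (pblock P x0) & pblock P x0 = x0 |: g P].
  move=> P; rewrite inE => /andP [PP CP].
  have [cP _ _ _] := PiP PP.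
  have xc : x0 \in cover P by rewrite cP inE.
  have BP := pblock_mem xc.
  have xB : x0 \in pblock P x0 by rewrite mem_pblock.
  have nCB : C != pblock P x0 by apply: contraNneq x0C => ->.
  by split => //; [apply: Pi_third | rewrite setD1K].
rewrite -(card_in_imset (f := g)).
  apply: subset_leq_card; apply/subsetP => _ /imsetP [P PS ->].
  have [BP xB eP eB] := key P PS.
  move: PS; rewrite inE => /andP [PP CP].
  have dCB : [disjoint C & pblock P x0] by apply: (Pi_disj PP CP BP); apply: contraNneq x0C => ->.
  rewrite in_setD1 powersetE; apply/andP; split.
  - apply/eqP => egD.
    have : ~:(C :|: pblock P x0) \in P by rewrite {2}eP /f3 !inE eqxx !orbT.
    have -> : ~:(C :|: pblock P x0) = set0.
      apply/setP => y; rewrite !inE eB egD /D !inE.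
      by case: (y \in C); case: (y == x0).
    by have [_ _ s0 _] := PiP PP; move/negbTE: s0 => ->.
  - apply/subsetP => y; rewrite /g /D !inE => /andP [-> yB] /=.
    by apply/negP => yC; apply: (disj_in dCB yC yB).
move=> P1 P2 P1S P2S eg.
have [_ _ e1 b1] := key P1 P1S; have [_ _ e2 b2] := key P2 P2S.
by rewrite e1 e2 b1 b2 eg.
Qed.

Lemma S_lower x0 x1 : x0 != x1 -> 2 ^ (n - 2) - 1 <= #|SC [set x0]|.
Proof.
move=> x01.
have cD : #|~: [set x0; x1]| = n - 2.
  have := cardsC [set x0; x1]; rewrite card_ord cards2 x01 => h.
  exact: etrans (esym (addKn 2 _)) (congr1 (fun x => x - 2) h).
set D := ~: [set x0; x1].
rewrite -cD -card_powD1.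
pose h S := f3 [set x0] (x1 |: S).
have memD : forall S, S \in powerset D :\ D -> (x0 \notin S) && (x1 \notin S).
  move=> S; rewrite in_setD1 powersetE => /andP [_ /subsetP sD].
  apply/andP; split; apply/negP => /sD; rewrite /D !inE ?eqxx ?orbT //.
rewrite -(card_in_imset (f := h)).
  apply: subset_leq_card; apply/subsetP => _ /imsetP [S SD ->].
  have /andP [x0S x1S] := memD S SD.
  rewrite inE; apply/andP; split; last by rewrite /h /f3 !inE eqxx.
  apply: f3_Pi.
  - by apply/set0Pn; exists x0; rewrite inE.
  - by apply/set0Pn; exists x1; rewrite !inE eqxx.
  - rewrite disjoints_subset; apply/subsetP => y; rewrite !inE => /eqP ->.
    by rewrite negb_or x01 x0S.
  - move: SD; rewrite in_setD1 powersetE => /andP [nSD sSD].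
    have : ~~ (D \subset S).
      by apply: contra nSD => h'; rewrite eqEsubset h' sSD.
    case/subsetPn => y yD yS.
    apply/set0Pn; exists y; move: yD; rewrite /D !inE !negb_or => /andP [-> ->].
    by rewrite yS.
move=> S1 S2 S1D S2D eh.
have /andP [_ x1S1] := memD S1 S1D; have /andP [_ x1S2] := memD S2 S2D.
have : x1 |: S1 \in h S2 by rewrite -eh /h /f3 !inE eqxx orbT.
rewrite /h /f3 !inE => /orP [/orP [] | ] /eqP e.
- by move/setP: e => /(_ x1); rewrite !inE eqxx eq_sym (negbTE x01).
- by rewrite -(setU1K x1S1) e setU1K.
- by move/setP: e => /(_ x1); rewrite !inE !eqxx !orbT.
Qed.

Lemma share (F G : {set {set 'I_n}}) B : B \in F -> B \in G -> 1 <= #|F :&: G|.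
Proof. by move=> BF BG; rewrite card_gt0; apply/set0Pn; exists B; rewrite inE BF BG. Qed.


Lemma card_setU_le (T : finType) (A B : {set T}) : #|A :|: B| <= #|A| + #|B|.
Proof. by rewrite cardsU leq_subr. Qed.

Lemma card_imset2_le (T1 T2 T3 : finType) (f : T1 -> T2 -> T3) (A : {set T1}) (B : {set T2}) :
  #|f @2: (A, B)| <= #|A| * #|B|.
Proof.
rewrite -cardsX; apply: leq_trans (leq_imset_card (fun p => f p.1 p.2) _).
apply: subset_leq_card; apply/subsetP => y /imset2P [a b ha hb ->].
by apply/imsetP; exists (a, b) => //; rewrite inE ha hb.
Qed.

Lemma shareP (F G : {set {set 'I_n}}) : 1 <= #|F :&: G| -> exists2 B, B \in F & B \in G.
Proof. by rewrite card_gt0 => /set0Pn [B]; rewrite inE => /andP [] ; exists B. Qed.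

Lemma blocks_sum P X Y : P \in Pi n 3 -> X \in P -> Y \in P -> X != Y ->
  #|X| + #|Y| + #|~:(X :|: Y)| = n.
Proof.
move=> PP XP YP XY; have d := Pi_disj PP XP YP XY.
have := cardsC (X :|: Y); rewrite card_ord cardsU (disjoint_setI0 d) cards0 subn0.
by [].
Qed.

Lemma ar3 N x y z : 0 < x -> 0 < y -> 0 < z -> x + y + z = N ->
  (2 ^ (N - x - 1) - 1) + (2 ^ (N - y - 1) - 1) + (2 ^ (N - z - 1) - 1) < 2 ^ (N - 1).
Proof.
case: x => // a; case: y => // b; case: z => // c _ _ _ <-.
have -> : a.+1 + b.+1 + c.+1 - a.+1 - 1 = b + c + 1 by lia.
have -> : a.+1 + b.+1 + c.+1 - b.+1 - 1 = a + c + 1 by lia.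
have -> : a.+1 + b.+1 + c.+1 - c.+1 - 1 = a + b + 1 by lia.
have -> : a.+1 + b.+1 + c.+1 - 1 = a + b + c + 2 by lia.
rewrite !expnD !expn1.
have := expn_gt0 2 a; have := expn_gt0 2 b; have := expn_gt0 2 c.
move: (2 ^ a) (2 ^ b) (2 ^ c) => [|p] // [|q] // [|r] // _ _ _.
have -> : 2 ^ 2 = 4 by [].
have h1 : q.+1 * r.+1 * 2 + p.+1 * r.+1 * 2 + p.+1 * q.+1 * 2 <= p.+1 * q.+1 * r.+1 * 4 + 2.
  have := leq0n (p * q * r); have := leq0n (p * q); have := leq0n (p * r); have := leq0n (q * r).
  nia.
have h2 : 2 <= q.+1 * r.+1 * 2 by nia.
have h3 : 2 <= p.+1 * r.+1 * 2 by nia.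
have h4 : 2 <= p.+1 * q.+1 * 2 by nia.
lia.
Qed.

Lemma one_bound P (calG : {set {set {set 'I_n}}}) : P \in Pi n 3 -> calG \subset Pi n 3 ->
  (forall G, G \in calG -> 1 <= #|P :&: G|) -> #|calG| < 2 ^ (n - 1).
Proof.
move=> PP hG hc.
have [cP _ _ c3] := PiP PP.
have /card_gt1P [X [Y [XP YP XY]]] : 1 < #|P| by rewrite c3.
have eP := Pi_third PP XP YP XY.
have dXY := Pi_disj PP XP YP XY.
have X0 := Pi_neq0 PP XP; have Y0 := Pi_neq0 PP YP.
have ZP : ~:(X :|: Y) \in P by rewrite eP /f3 !inE eqxx !orbT.
have Z0 := Pi_neq0 PP ZP.
have [x xX] := set0Pn _ X0; have [y yY] := set0Pn _ Y0.
have xY : x \notin Y by apply/negP => xY; apply: (disj_in dXY xX xY).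
have yX : y \notin X by apply/negP => yX; apply: (disj_in dXY yX yY).
have xZ : x \notin ~:(X :|: Y) by rewrite !inE xX.
have sub : calG \subset (SC X :|: SC Y) :|: SC (~:(X :|: Y)).
  apply/subsetP => G GG; have [B BP BG] := shareP (hc G GG).
  have GP : G \in Pi n 3 by apply: (subsetP hG).
  rewrite eP /f3 !inE in BP.
  by case/orP: BP => [/orP [] | ] /eqP eB; subst B; rewrite !in_setU (inSC GP BG) ?orbT.
apply: leq_ltn_trans (subset_leq_card sub) _.
apply: leq_ltn_trans (card_setU_le _ _) _.
apply: leq_ltn_trans (leq_add (card_setU_le _ _) (leqnn _)) _.
apply: leq_ltn_trans (leq_add (leq_add (S_upper yX) (S_upper xY)) (S_upper xZ)) _.
apply: ar3; rewrite ?card_gt0 //.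
exact: blocks_sum PP XP YP XY.
Qed.

Lemma cover3 (A B D : {set 'I_n}) : cover [set A; B; D] = A :|: B :|: D.
Proof.
apply/setP => x; apply/bigcupP/idP.
- move=> [E]; rewrite !inE => /orP [/orP [] | ] /eqP -> ->; by rewrite ?orbT.
- rewrite !inE => /orP [/orP [] | ] h; [exists A | exists B | exists D];
    by rewrite // !inE eqxx ?orbT.
Qed.

Section Lower.
Variables x0 x1 x2 x3 : 'I_n.
Hypotheses (h01 : x0 != x1) (h02 : x0 != x2) (h03 : x0 != x3)
  (h12 : x1 != x2) (h13 : x1 != x3) (h23 : x2 != x3).
Let h10 : x1 != x0. Proof. by rewrite eq_sym. Qed.
Let h20 : x2 != x0. Proof. by rewrite eq_sym. Qed.
Let h30 : x3 != x0. Proof. by rewrite eq_sym. Qed.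
Let h21 : x2 != x1. Proof. by rewrite eq_sym. Qed.
Let h31 : x3 != x1. Proof. by rewrite eq_sym. Qed.
Let h32 : x3 != x2. Proof. by rewrite eq_sym. Qed.

Ltac simpx := rewrite ?inE ?eqxx ?(negbTE h01) ?(negbTE h02) ?(negbTE h03)
  ?(negbTE h12) ?(negbTE h13) ?(negbTE h23) ?(negbTE h10) ?(negbTE h20)
  ?(negbTE h30) ?(negbTE h21) ?(negbTE h31) ?(negbTE h32) /=.

Lemma f3_single a b c : a != b -> c != a -> c != b -> f3 [set a] [set b] \in Pi n 3.
Proof.
move=> ab ca cb; apply: f3_Pi.
- by apply/set0Pn; exists a; rewrite inE.
- by apply/set0Pn; exists b; rewrite inE.
- by rewrite disjoints1 inE.
- by apply/set0Pn; exists c; rewrite !inE negb_or ca cb.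
Qed.

Definition F0 := [set f3 [set x0] [set x1]; f3 [set x0] [set x2]].
Definition G0 := SC [set x0] :|: [set f3 [set x1] [set x2]].

Lemma F0_sub : F0 \subset Pi n 3.
Proof.
apply/subsetP => P /set2P [] ->.
- by apply: (f3_single (c := x3)).
- by apply: (f3_single (c := x3)).
Qed.

Lemma G0_sub : G0 \subset Pi n 3.
Proof.
apply/subsetP => P; rewrite /G0 in_setU in_set1 /SC in_set => /orP [/andP [] // | /eqP ->].
by apply: (f3_single (c := x3)).
Qed.

Lemma cross0 : cross1 F0 G0.
Proof.
move=> F G; rewrite /F0 /G0 /SC !inE => /orP [] /eqP -> /orP [/andP [_ h] | /eqP ->].
- by apply: (share (B := [set x0])) => //; rewrite /f3 !inE eqxx.
- by apply: (share (B := [set x1])); rewrite /f3 !inE eqxx ?orbT.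
- by apply: (share (B := [set x0])) => //; rewrite /f3 !inE eqxx.
- by apply: (share (B := [set x2])); rewrite /f3 !inE eqxx ?orbT.
Qed.

Lemma nt0 : nontrivial F0 G0.
Proof.
move=> [B hB].
have hG : B \in f3 [set x1] [set x2] by apply: hB; rewrite /G0 !inE eqxx !orbT.
have hF1 : B \in f3 [set x0] [set x1] by apply: hB; rewrite /F0 !inE eqxx.
have hF2 : B \in f3 [set x0] [set x2] by apply: hB; rewrite /F0 !inE eqxx orbT.
move: hG; rewrite /f3 !inE => /orP [/orP [] | ] /eqP eB; subst B.
- move: hF2; rewrite /f3 !inE => /orP [/orP [] | ] /eqP /setP e.
  + by move: (e x1); simpx.
  + by move: (e x1); simpx.
  + by move: (e x3); simpx.
- move: hF1; rewrite /f3 !inE => /orP [/orP [] | ] /eqP /setP e.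
  + by move: (e x2); simpx.
  + by move: (e x2); simpx.
  + by move: (e x3); simpx.
- move: hF1; rewrite /f3 !inE => /orP [/orP [] | ] /eqP /setP e.
  + by move: (e x3); simpx.
  + by move: (e x1); simpx.
  + by move: (e x0); simpx.
Qed.

Lemma card0 (hn : 2 <= n) : 2 ^ (n - 1) <= #|F0| * #|G0|.
Proof.
have ne : f3 [set x0] [set x1] != f3 [set x0] [set x2].
  apply/eqP => e.
  have : [set x1] \in f3 [set x0] [set x2] by rewrite -e /f3 !inE eqxx orbT.
  rewrite /f3 !inE => /orP [/orP [] | ] /eqP /setP e'.
  + by move: (e' x1); simpx.
  + by move: (e' x1); simpx.
  + by move: (e' x3); simpx.
have cF : #|F0| = 2 by rewrite /F0 cards2 ne.
have nG : f3 [set x1] [set x2] \notin SC [set x0].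
  rewrite /SC in_set negb_and; apply/orP; right; rewrite /f3 !inE.
  apply/negP => /orP [/orP [] | ] /eqP /setP e'.
  + by move: (e' x0); simpx.
  + by move: (e' x0); simpx.
  + by move: (e' x3); simpx.
have cG : #|G0| = 1 + #|SC [set x0]| by rewrite /G0 setUC cardsU1 nG.
have e : n - 1 = (n - 2).+1 by rewrite -subSn // subSS.
rewrite cF cG e expnS leq_mul2l /= -leq_subLR.
exact: S_lower h01.
Qed.
End Lower.
End Base.

Lemma lower_pair n (hn : 16 <= n) : exists (F G : {set {set {set 'I_n}}}),
  [/\ F \subset Pi n 3, G \subset Pi n 3, cross1 F G, nontrivial F G &
      2 ^ (n - 1) <= #|F| * #|G|].
Proof.
pose x0 : 'I_n := Ordinal (leq_trans (isT : 1 <= 16) hn).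
pose x1 : 'I_n := Ordinal (leq_trans (isT : 2 <= 16) hn).
pose x2 : 'I_n := Ordinal (leq_trans (isT : 3 <= 16) hn).
pose x3 : 'I_n := Ordinal (leq_trans (isT : 4 <= 16) hn).
have h01 : x0 != x1 by []. have h02 : x0 != x2 by []. have h03 : x0 != x3 by [].
have h12 : x1 != x2 by []. have h13 : x1 != x3 by []. have h23 : x2 != x3 by [].
exists (F0 x0 x1 x2), (G0 x0 x1 x2); split.
- by apply: (@F0_sub _ x0 x1 x2 x3).
- by apply: (@G0_sub _ x0 x1 x2 x3).
- exact: cross0.
- by apply: (@nt0 _ x0 x1 x2 x3).
- apply: (@card0 _ x0 x1 x2 x3) => //.
  exact: (leq_trans (isT : 2 <= 16) hn).
Qed.


Section RealPart.
Local Open Scope R_scope.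
Lemma n_ge16 (n : nat) : (Rle (Rmult (INR 2) (Lkt 3 1)) (INR n)) -> (16 <= n)%N.
Proof.
move=> h.
have eL : Lkt 3 1 = Rplus (INR 2) (Rmult (INR 3) (Rdiv (ln (INR 6)) (ln (INR 2)))) by reflexivity.
rewrite eL in h.
have e2 : INR 2 = 2 by simpl; ring.
have e3 : INR 3 = 3 by simpl; ring.
have e6 : INR 6 = (2 * 3) by simpl; ring.
rewrite e2 e3 e6 in h.
have l2 : (0 < ln 2) by have := ln_lt_2; lra.
have l3 : (ln 2 < ln 3) by apply: ln_increasing; lra.
have l6 : ln (2 * 3) = (ln 2 + ln 3) by apply: ln_mult; lra.
have q : (2 <= ln (2 * 3) / ln 2).
  have e : ln (2 * 3) / ln 2 * ln 2 = ln (2 * 3) by field; lra.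
  nra.
apply/leP; apply: INR_le.
have -> : INR 16 = 16 by simpl; ring.
lra.
Qed.
End RealPart.

End Helpers.
Import Helpers.
Unset Implicit Arguments. Set Strict Implicit.

Theorem mainTheorem7 (n : nat)
  (hn : Rle (Rmult (INR 2) (Lkt 3 1)) (INR n))
  (calF calG : {set {set {set 'I_n}}})
  (hF : calF \subset Pi n 3) (hG : calG \subset Pi n 3)
  (hcross : cross1 calF calG) (hnt : nontrivial calF calG)
  (hmax : forall calF' calG' : {set {set {set 'I_n}}},
      calF' \subset Pi n 3 -> calG' \subset Pi n 3 ->
      cross1 calF' calG' -> nontrivial calF' calG' ->
      #|calF'| * #|calG'| <= #|calF| * #|calG|)
  (hle : #|calF| <= #|calG|) :
  exists (A : {set 'I_n}) (M : {set {set 'I_n}}),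
    #|A| = 1 /\ is_partial_partition M /\ #|M| = 3 /\ A \in M /\
    #|cover M| < n /\
    calF = calA 3 [set A] M /\ calG = calB 3 [set A] M.
Proof.
have n16 := n_ge16 hn.
have LB : 2 ^ (n - 1) <= #|calF| * #|calG|.
  have [F0 [G0 [h1 h2 h3 h4 h5]]] := lower_pair n16.
  exact: leq_trans h5 (hmax _ _ h1 h2 h3 h4).
have e8 : 2 ^ 8 <= 2 ^ (n - 1) by apply: leq_pexp2l => //; lia.
have small : forall k, k <= 12 -> #|calG| <= k -> False.
  move=> k hk hGk.
  have h : #|calF| * #|calG| <= 12 * 12.
    exact: leq_mul (leq_trans hle (leq_trans hGk hk)) (leq_trans hGk hk).
  by have := leq_trans e8 (leq_trans LB h).
have cross' : forall F G, F \in calF -> G \in calG -> exists2 B, B \in F & B \in G.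
  by move=> F G hF' hG'; apply: shareP (hcross F G hF' hG').
have FP : forall F, F \in calF -> F \in Pi n 3 by move=> F; apply: (subsetP hF).
have GP : forall G, G \in calG -> G \in Pi n 3 by move=> G; apply: (subsetP hG).
have [F1 [F2 [F1F F2F F12]]] : exists F1 F2, [/\ F1 \in calF, F2 \in calF & F1 != F2].
  apply/card_gt1P; rewrite ltnNge; apply/negP => h1.
  have : 0 < #|calF|.
    rewrite lt0n; apply/negP => /eqP h0; move: LB; rewrite h0 mul0n.
    by rewrite leqn0 expn_eq0.
  case/card_gt0P => P PF.
  have := one_bound (FP P PF) hG (fun G GG => hcross P G PF GG).
  move=> hb.
  have := leq_trans LB (leq_mul h1 (leqnn #|calG|)); rewrite mul1n => h2.
  by have := leq_ltn_trans h2 hb; rewrite ltnn.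
have F1P := FP F1 F1F; have F2P := FP F2 F2F.
have [_ _ _ c1] := PiP F1P; have [_ _ _ c2] := PiP F2P.
case: (eqVneq (F1 :&: F2) set0) => [h0 | /set0Pn [C]].
  exfalso; apply: (small 9) => //.
  have sub : calG \subset (@f3 n) @2: (F1, F2).
    apply/subsetP => G GG.
    have [X XF1 XG] := cross' F1 G F1F GG; have [Y YF2 YG] := cross' F2 G F2F GG.
    have XY : X != Y.
      apply/eqP => eXY; subst Y.
      have : X \in F1 :&: F2 by rewrite inE XF1 YF2.
      by rewrite h0 inE.
    rewrite (Pi_third (GP G GG) XG YG XY); apply/imset2P; exists X Y => //.
  apply: leq_trans (subset_leq_card sub) _.
  by apply: leq_trans (card_imset2_le _ _ _) _; rewrite c1 c2.
rewrite inE => /andP [CF1 CF2].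
have side : forall G, G \in calG -> C \notin G ->
    exists X Y, [/\ X \in F1, Y \in F2, X \in G, Y \in G & X != Y].
  move=> G GG CG.
  have [X XF1 XG] := cross' F1 G F1F GG; have [Y YF2 YG] := cross' F2 G F2F GG.
  exists X, Y; split => //.
  apply/eqP => eXY; subst Y.
  have CX : C != X by apply: contraNneq CG => ->.
  by move: F12; rewrite (Pi_third F1P CF1 XF1 CX) (Pi_third F2P CF2 YF2 CX) eqxx.
have side' : forall G, G \in calG -> C \notin G -> G \in (@f3 n) @2: (F1, F2).
  move=> G GG CG; have [X [Y [XF1 YF2 XG YG XY]]] := side G GG CG.
  rewrite (Pi_third (GP G GG) XG YG XY); apply/imset2P; exists X Y => //.
case: (boolP [forall F in calF, C \in F]) => [/forall_inP hall | /forall_inPn [F3 F3F CF3]];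
  last first.
  exfalso; apply: (small 12) => //.
  have sub : calG \subset [set f3 C D | D in F3] :|: (@f3 n) @2: (F1, F2).
    apply/subsetP => G GG; rewrite in_setU.
    case: (boolP (C \in G)) => CG; last by rewrite side' ?orbT.
    have [D DF3 DG] := cross' F3 G F3F GG.
    have CD : C != D by apply: contraNneq CF3 => ->.
    rewrite (Pi_third (GP G GG) CG DG CD); apply/orP; left; apply/imsetP; exists D => //.
  apply: leq_trans (subset_leq_card sub) _.
  apply: leq_trans (card_setU_le _ _) _.
  have [_ _ _ c3] := PiP (FP F3 F3F).
  have := leq_imset_card (f3 C) F3; rewrite c3 => h3.
  have := card_imset2_le (@f3 n) F1 F2; rewrite c1 c2 => h4.
  exact: leq_add h3 h4.
have [G0 G0G CG0] : exists2 G0, G0 \in calG & C \notin G0.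
  case: (boolP [exists G0 in calG, C \notin G0]) => [/exists_inP //| /exists_inPn hno].
  exfalso; apply: hnt; exists C => P; rewrite in_setU => /orP [PF | PG].
    exact: hall.
  by have := hno P PG; rewrite negbK.
have formF : forall F, F \in calF -> exists2 U, U \in G0 & F = f3 C U /\ U \in F.
  move=> F FF; have [U UF UG0] := cross' F G0 FF G0G.
  have CU : C != U by apply: contraNneq CG0 => ->.
  by exists U => //; split => //; apply: Pi_third (FP F FF) (hall F FF) UF CU.
have [U UG0 [eF1 UF1]] := formF F1 F1F.
have [V VG0 [eF2 VF2]] := formF F2 F2F.
have UV : U != V by apply: contraNneq F12 => eUV; rewrite eF1 eF2 eUV.
have CU : C != U by apply: contraNneq CG0 => ->.
have CV : C != V by apply: contraNneq CG0 => ->.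
have G0P := GP G0 G0G.
have dCU := Pi_disj F1P CF1 UF1 CU.
have dCV := Pi_disj F2P CF2 VF2 CV.
have dUV := Pi_disj G0P UG0 VG0 UV.
have C0 := Pi_neq0 F1P CF1; have U0 := Pi_neq0 G0P UG0; have V0 := Pi_neq0 G0P VG0.
have eG0 := Pi_third G0P UG0 VG0 UV.
have WG0 : ~:(U :|: V) \in G0 by rewrite eG0 /f3 !inE eqxx !orbT.
have CW : C != ~:(U :|: V) by apply: contraNneq CG0 => ->.
have eF : calF = [set F1; F2].
  apply/setP => F; apply/idP/idP; last by case/set2P => ->.
  move=> FF; have [X XG0 [eF XF]] := formF F FF.
  move: XG0; rewrite eG0 /f3 !inE => /orP [/orP [] | ] /eqP eX; subst X.
  - by rewrite eF -eF1 eqxx.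
  - by rewrite eF -eF2 eqxx orbT.
  - exfalso.
    have dCW := Pi_disj (FP F FF) (hall F FF) XF CW.
    have [c cC] := set0Pn _ C0.
    have cU : c \notin U by apply/negP => h; apply: (disj_in dCU cC h).
    have cV : c \notin V by apply/negP => h; apply: (disj_in dCV cC h).
    by apply: (disj_in dCW cC); rewrite !inE (negbTE cU) (negbTE cV).
have cF : #|calF| = 2 by rewrite eF cards2 F12.
have eN : n - 1 = (n - 2).+1 by move: n16; clear; lia.
have hG2 : 2 ^ (n - 2) <= #|calG|.
  by move: LB; rewrite cF eN expnS leq_mul2l.
have sub : calG \subset SC C :|: (@f3 n) @2: (F1, F2).
  apply/subsetP => G GG; rewrite in_setU.
  case: (boolP (C \in G)) => CG; last by rewrite side' ?orbT.
  by rewrite inSC // GP.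
have [u uU] := set0Pn _ U0.
have uC : u \notin C by apply/negP => h; apply: (disj_in dCU h uU).
have UB : #|calG| <= 2 ^ (n - #|C| - 1) - 1 + 9.
  apply: leq_trans (subset_leq_card sub) _.
  apply: leq_trans (card_setU_le _ _) _.
  apply: leq_add; first exact: S_upper uC.
  by apply: leq_trans (card_imset2_le _ _ _) _; rewrite c1 c2.
have cC : #|C| = 1.
  have : 0 < #|C| by rewrite card_gt0.
  case: #|C| UB => [//|[//|k]] UB _.
  exfalso.
  have h1 : 2 ^ (n - k.+2 - 1) <= 2 ^ (n - 3) by apply: leq_pexp2l => //; clear; lia.
  have h2 : 2 ^ (n - 2) = 2 * 2 ^ (n - 3).
    by rewrite -expnS; congr (2 ^ _); move: n16; clear; lia.
  have h3 : 2 ^ 4 <= 2 ^ (n - 3) by apply: leq_pexp2l => //; move: n16; clear; lia.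
  have h4 : 2 ^ 4 = 16 by [].
  move: UB h1 h2 h3 h4 hG2; clear; lia.
have [a eCa] : exists a, C = [set a] by apply/cards1P; rewrite cC.
have aU : a \notin U by apply/negP => h; apply: (disj_in dCU _ h); rewrite eCa inE.
have aV : a \notin V by apply/negP => h; apply: (disj_in dCV _ h); rewrite eCa inE.
have [b bW bC] : exists2 b, b \in ~:(U :|: V) & b \notin C.
  apply/subsetPn; apply/negP => sWC.
  move: CW; rewrite eq_sym eqEsubset sWC /= eCa sub1set !inE negb_or aU aV.
  by [].
have bU : b \notin U by move: bW; rewrite !inE negb_or => /andP [].
have bV : b \notin V by move: bW; rewrite !inE negb_or => /andP [].
have nCU : (C == U) = false by apply/negbTE.
have nCV : (C == V) = false by apply/negbTE.
have nUC : (U == C) = false by rewrite eq_sym.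
have nVC : (V == C) = false by rewrite eq_sym.
have nUV : (U == V) = false by apply/negbTE.
have nVU : (V == U) = false by rewrite eq_sym.
exists C, [set C; U; V]; split; first exact: cC.
split.
  apply/andP; split.
    apply/trivIsetP => X Y; rewrite !inE.
    move=> /orP [/orP [] | ] /eqP -> /orP [/orP [] | ] /eqP -> //; rewrite ?eqxx ?nCU ?nCV ?nUC ?nVC ?nUV ?nVU //= => _;
      by rewrite 1?disjoint_sym.
  by rewrite !inE !negb_or !(eq_sym set0) C0 U0 V0.
split.
  by rewrite -setUA cardsU1 cards2 !inE negb_or nCU nCV UV.
split; first by rewrite !inE eqxx.
split.
  rewrite cover3.
  have hp : C :|: U :|: V \proper setT.
    rewrite properT; apply/eqP => e; move/setP: e => /(_ b).
    by rewrite !inE (negbTE bC) (negbTE bU) (negbTE bV).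
  by move: (proper_card hp); rewrite cardsT card_ord.
have CF : forall F, F \in Pi n 3 -> C \in F -> (U \in F) || (V \in F) -> F \in calF.
  move=> F FP' CF' /orP [] h.
  - by rewrite (Pi_third FP' CF' h CU) -eF1.
  - by rewrite (Pi_third FP' CF' h CV) -eF2.
split.
  rewrite /calA; apply/setP => F; apply/idP/idP.
  - rewrite eF => /set2P [] ->.
    + apply/setIdP; split => //; rewrite sub1set CF1 /=.
      by apply/set0Pn; exists U; rewrite !inE UF1 nUC eqxx !orbT.
    + apply/setIdP; split => //; rewrite sub1set CF2 /=.
      by apply/set0Pn; exists V; rewrite !inE VF2 nVC eqxx !orbT.
  - case/setIdP => FP' /andP [sC /set0Pn [B]].
    rewrite sub1set in sC.
    rewrite !inE => /andP [BF /andP [nBC BM]].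
    apply: CF => //.
    move: BM => /orP [/orP [] | ] /eqP eB; subst B.
    + by rewrite eqxx in nBC.
    + by rewrite BF.
    + by rewrite BF orbT.
have hSC : SC C \subset calG.
  pose G' := calG :|: SC C.
  have hG' : G' \subset Pi n 3.
    by rewrite subUset hG; apply/subsetP => P /SCP [].
  have hc' : cross1 calF G'.
    move=> F G FF; rewrite in_setU => /orP [GG | /SCP [_ CG]]; first exact: hcross.
    exact: share (hall F FF) CG.
  have hnt' : nontrivial calF G'.
    move=> [B hB]; apply: hnt; exists B => P hP; apply: hB.
    by move: hP; rewrite !in_setU => /orP [->|->]; rewrite ?orbT.
  have := hmax _ _ hF hG' hc' hnt'; rewrite cF leq_mul2l /= => hle'.
  have : calG == G' by rewrite eqEcard subsetUl hle'.
  by move/eqP => ->; apply: subsetUr.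
have eB : calB 3 [set C] [set C; U; V] = SC C :|: [set G0].
  rewrite /calB imset_set1; congr (_ :|: _).
    apply/setP => G; rewrite /SC; apply/setIdP/setIdP => [][h1 h2]; split => //.
      by rewrite -sub1set.
    by rewrite sub1set.
  congr [set _]; rewrite eG0 /f3 cover3.
  have eMC : [set C; U; V] :\ C = [set U; V].
    apply/setP => B; rewrite !inE.
    case: (eqVneq B C) => [->|nBC] /=; first by rewrite nCU nCV.
    by [].
  have eW : C :|: ~:(C :|: U :|: V) = ~:(U :|: V).
    apply/setP => x; rewrite !inE.
    case xC: (x \in C) => /=.
      have xU : x \notin U by apply/negP => h; apply: (disj_in dCU xC h).
      have xV : x \notin V by apply/negP => h; apply: (disj_in dCV xC h).
      by rewrite (negbTE xU) (negbTE xV).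
    by rewrite ?orbA.
  by rewrite eMC eW.
rewrite eB; apply/setP => G; apply/idP/idP; last first.
  rewrite in_setU in_set1 => /orP [GS | /eqP ->]; last exact: G0G.
  exact: (subsetP hSC).
move=> GG; rewrite in_setU in_set1.
case: (boolP (C \in G)) => CG; first by rewrite inSC // GP.
have [X [Y [XF1 YF2 XG YG XY]]] := side G GG CG.
have dXY := Pi_disj (GP G GG) XG YG XY.
have [v vV] := set0Pn _ V0.
have vC : v \notin C by apply/negP => h; apply: (disj_in dCV h vV).
have vU : v \notin U by apply/negP => h; apply: (disj_in dUV h vV).
have uV : u \notin V by apply/negP => h; apply: (disj_in dUV uU h).
move: XF1; rewrite eF1 /f3 !inE => /orP [/orP [] | ] /eqP eX; subst X.
- by rewrite XG in CG.
- move: YF2; rewrite eF2 /f3 !inE => /orP [/orP [] | ] /eqP eY; subst Y.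
  + by rewrite YG in CG.
  + by rewrite (Pi_third (GP G GG) XG YG XY) -eG0 eqxx orbT.
  + exfalso; apply: (disj_in dXY uU).
    by rewrite !inE negb_or uC uV.
- move: YF2; rewrite eF2 /f3 !inE => /orP [/orP [] | ] /eqP eY; subst Y.
  + by rewrite YG in CG.
  + exfalso; apply: (disj_in dXY _ vV).
    by rewrite !inE negb_or vC vU.
  + exfalso; apply: (disj_in dXY (x := b)).
    * by rewrite !inE negb_or bC bU.
    * by rewrite !inE negb_or bC bV.
Qed.
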